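(* Let $L\in\mathbb Z_{\ge1}$, $\delta>0$, $C>0$. For all $N\ge1$ and $z$ with $\mathrm{Re}(z)\le-\delta$, $|z|\le C$, $$-\chi(-z,N)=\frac{N}{z}\mathrm{Li}_2(e^{z})-\frac12\log(1-e^{z})+\sum_{\ell=2}^{L}\frac{B_\ell}{\ell!}\Big(\frac{z}{N}\Big)^{\ell-1}\mathrm{Li}_{2-\ell}(e^{z})+O\Big(\frac1{N^{L}}\Big),$$ with principal logarithm and an implied constant depending only on $L,\delta,C$.
   Context: For $\mathrm{Re}(w)>0$ and $t>0$, $\chi(w,t):=\sum_{r=1}^\infty\dfrac{e^{-rw}}{r(e^{rw/t}-1)}$. Polylogarithms: $\mathrm{Li}_s(u)=\sum_{n\ge1}u^n/n^s$ for $|u|<1$. $B_n$ are the Bernoulli numbers ($z/(e^z-1)=\sum B_nz^n/n!$). *)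

(* Defs.v *)
From Stdlib Require Import Reals Lra List ZArith Arith Factorial ClassicalEpsilon.
Open Scope R_scope.

Definition Cx : Type := (R * R)%type.
Definition Re (z : Cx) : R := fst z.
Definition Im (z : Cx) : R := snd z.
Definition RtoC (x : R) : Cx := (x, 0).
Definition Cadd (z w : Cx) : Cx := (Re z + Re w, Im z + Im w).
Definition Copp (z : Cx) : Cx := (- Re z, - Im z).
Definition Csub (z w : Cx) : Cx := Cadd z (Copp w).
Definition Cmul (z w : Cx) : Cx :=
  (Re z * Re w - Im z * Im w, Re z * Im w + Im z * Re w).
Definition Cinv (z : Cx) : Cx :=
  (Re z / (Re z ^ 2 + Im z ^ 2), - Im z / (Re z ^ 2 + Im z ^ 2)).
Definition Cdiv (z w : Cx) : Cx := Cmul z (Cinv w).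
Definition Cnorm (z : Cx) : R := sqrt (Re z ^ 2 + Im z ^ 2).
Fixpoint Cpow (z : Cx) (n : nat) : Cx :=
  match n with O => RtoC 1 | S m => Cmul z (Cpow z m) end.
Definition Cexp (z : Cx) : Cx := (exp (Re z) * cos (Im z), exp (Re z) * sin (Im z)).
(** principal argument, in (-PI, PI] *)
Definition Carg (z : Cx) : R :=
  let x := Re z in let y := Im z in
  match Rlt_dec 0 x with
  | left _ => atan (y / x)
  | right _ =>
    match Rlt_dec x 0 with
    | left _ => match Rle_dec 0 y with
                | left _ => atan (y / x) + PI
                | right _ => atan (y / x) - PI end
    | right _ =>
      match Rlt_dec 0 y with
      | left _ => PI / 2
      | right _ => match Rlt_dec y 0 with left _ => - (PI / 2) | right _ => 0 end
      end
    end
  end.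
Definition Clog (z : Cx) : Cx := (ln (Cnorm z), Carg z).

Fixpoint Cpartial (f : nat -> Cx) (m : nat) : Cx :=
  match m with O => f O | S k => Cadd (Cpartial f k) (f (S k)) end.
Definition Cseries_cv (f : nat -> Cx) (l : Cx) : Prop :=
  Un_cv (fun m => Re (Cpartial f m)) (Re l) /\ Un_cv (fun m => Im (Cpartial f m)) (Im l).
(** value of a convergent series (sum_{n>=0} f n); chosen by epsilon, 0 if divergent *)
Definition Cseries (f : nat -> Cx) : Cx :=
  epsilon (inhabits (RtoC 0)) (fun l => Cseries_cv f l).

Definition Li (s : Z) (u : Cx) : Cx :=
  Cseries (fun n => Cmul (Cpow u (S n)) (RtoC (powerRZ (INR (S n)) (- s)))).

(** chi(w,t) = sum_{r>=1} e^{-rw} / (r (e^{rw/t} - 1)) *)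
Definition chi (w : Cx) (t : R) : Cx :=
  Cseries (fun n =>
    let r := INR (S n) in
    Cdiv (Cexp (Cmul (RtoC (- r)) w))
         (Cmul (RtoC r) (Csub (Cexp (Cmul (RtoC (r / t)) w)) (RtoC 1)))).

(** Bernoulli numbers, z/(e^z-1) = sum B_n z^n/n!  (so B_1 = -1/2), via the
    equivalent standard recurrence  sum_{k=0}^{m} C(m+1,k) B_k = 0 (m>=1), B_0 = 1.
    bern_list n = [B_0; ...; B_n]. *)
Fixpoint bern_list (n : nat) : list R :=
  match n with
  | O => 1 :: nil
  | S k =>
    let l := bern_list k in
    let m := S k in
    l ++ (- / INR (m + 1) *
          fold_right Rplus 0 (map (fun j => C (m + 1) j * nth j l 0) (seq 0 m))) :: nil
  end.
Definition bernoulli (n : nat) : R := nth n (bern_list n) 0.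

Definition prop24_rhs (L N : nat) (z : Cx) : Cx :=
  Cadd (Cadd (Cmul (Cdiv (RtoC (INR N)) z) (Li 2 (Cexp z)))
             (Cmul (RtoC (- / 2)) (Clog (Csub (RtoC 1) (Cexp z)))))
       (fold_right Cadd (RtoC 0)
          (map (fun l => Cmul (RtoC (bernoulli l / INR (fact l)))
                              (Cmul (Cpow (Cdiv z (RtoC (INR N))) (l - 1))
                                    (Li (2 - Z.of_nat l) (Cexp z))))
               (seq 2 (L - 1)))).

(* Main.v *)
Require Import Defs.
From Stdlib Require Import Reals Lra Lia List ZArith Arith Factorial ClassicalEpsilon.
From Coquelicot Require Import Coquelicot.
Open Scope R_scope.

Definition CE (z : C) : C := Defs.Cexp z.

Lemma CE_add : forall a b : C, CE (a + b)%C = (CE a * CE b)%C.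
Proof.
  intros [a1 a2] [b1 b2]; unfold CE, Defs.Cexp, Defs.Re, Defs.Im; simpl.
  rewrite exp_plus, cos_plus, sin_plus.
  apply injective_projections; simpl; ring.
Qed.

Lemma CE_0 : CE 0%C = 1%C.
Proof. unfold CE, Defs.Cexp, Defs.Re, Defs.Im; simpl. rewrite exp_0, cos_0, sin_0.
  apply injective_projections; simpl; ring. Qed.

Lemma CE_opp : forall a : C, (CE (- a) * CE a)%C = 1%C.
Proof. intros a. rewrite <- CE_add. replace (-a + a)%C with (RtoC 0) by ring. apply CE_0. Qed.

Lemma CE_nz : forall a : C, CE a <> 0%C.
Proof. intros a H. pose proof (CE_opp a) as H1. rewrite H, Cmult_0_r in H1.
  apply C1_nz. auto. Qed.

Lemma Cmod_CE : forall a : C, Cmod (CE a) = exp (Re a).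
Proof. intros [a1 a2]; unfold Cmod, CE, Defs.Cexp, Defs.Re, Defs.Im; simpl.
  match goal with |- sqrt ?X = _ => replace X with (exp a1 * exp a1) end.
  apply sqrt_square. left; apply exp_pos.
  pose proof (sin2_cos2 a2) as H. unfold Rsqr in H. nra. Qed.

Lemma Cpow_CE : forall (a : C) n, Cpow (CE a) n = CE (RtoC (INR n) * a)%C.
Proof. intros a n; induction n.
  - simpl. replace (RtoC 0 * a)%C with (RtoC 0) by ring. rewrite CE_0; reflexivity.
  - simpl Cpow. rewrite IHn, <- CE_add. f_equal. rewrite S_INR, RtoC_plus. ring.
Qed.

Fixpoint csum (f : nat -> C) (n : nat) : C :=
  match n with O => RtoC 0 | S k => (csum f k + f k)%C end.
Fixpoint rsum (f : nat -> R) (n : nat) : R :=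
  match n with O => 0 | S k => rsum f k + f k end.

Lemma csum_ext_lt f g n : (forall k, (k < n)%nat -> f k = g k) -> csum f n = csum g n.
Proof. induction n; intros H; simpl; auto. rewrite IHn, H; auto. Qed.
Lemma rsum_ext_lt f g n : (forall k, (k < n)%nat -> f k = g k) -> rsum f n = rsum g n.
Proof. induction n; intros H; simpl; auto. rewrite IHn, H; auto. Qed.
Lemma csum_shift f n : csum f (S n) = (f 0%nat + csum (fun k => f (S k)) n)%C.
Proof. induction n; simpl in *. ring. rewrite IHn. ring. Qed.
Lemma rsum_shift f n : rsum f (S n) = f 0%nat + rsum (fun k => f (S k)) n.
Proof. induction n; simpl in *. ring. rewrite IHn. ring. Qed.
Lemma csum_scal k f n : csum (fun i => k * f i)%C n = (k * csum f n)%C.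
Proof. induction n; simpl. ring. rewrite IHn. ring. Qed.
Lemma rsum_scal k f n : rsum (fun i => k * f i) n = k * rsum f n.
Proof. induction n; simpl. ring. rewrite IHn. ring. Qed.
Lemma csum_plus f g n : csum (fun i => f i + g i)%C n = (csum f n + csum g n)%C.
Proof. induction n; simpl. ring. rewrite IHn. ring. Qed.
Lemma csum_minus f g n : csum (fun i => f i - g i)%C n = (csum f n - csum g n)%C.
Proof. induction n; simpl. ring. rewrite IHn. ring. Qed.
Lemma rsum_plus f g n : rsum (fun i => f i + g i) n = rsum f n + rsum g n.
Proof. induction n; simpl. ring. rewrite IHn. ring. Qed.
Lemma fst_csum f n : fst (csum f n) = rsum (fun k => fst (f k)) n.
Proof. induction n; simpl; auto. rewrite IHn; auto. Qed.
Lemma snd_csum f n : snd (csum f n) = rsum (fun k => snd (f k)) n.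
Proof. induction n; simpl; auto. rewrite IHn; auto. Qed.
Lemma rsum_le f g n : (forall k, (k < n)%nat -> f k <= g k) -> rsum f n <= rsum g n.
Proof. induction n; intros H; simpl. lra. pose proof (H n (Nat.lt_succ_diag_r n)).
  assert (rsum f n <= rsum g n) by (apply IHn; intros; apply H; lia). lra. Qed.
Lemma Cmod_csum f n : Cmod (csum f n) <= rsum (fun k => Cmod (f k)) n.
Proof. induction n; simpl. rewrite Cmod_0; lra.
  eapply Rle_trans. apply Cmod_triangle. lra. Qed.
Lemma rsum_nonneg f n : (forall k, (k < n)%nat -> 0 <= f k) -> 0 <= rsum f n.
Proof. intros H. replace 0 with (rsum (fun _ => 0) n). apply rsum_le; auto.
  clear H; induction n; simpl; auto. rewrite IHn; ring. Qed.

Lemma fold_seq_C (f : nat -> C) s n :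
  fold_right Cadd (Defs.RtoC 0) (map f (seq s n)) = csum (fun i => f (s + i)%nat) n.
Proof. revert s; induction n; intros s. reflexivity.
  cbn [seq map fold_right]. rewrite IHn, csum_shift. rewrite Nat.add_0_r.
  change (Cadd (f s) (csum (fun i : nat => f (S s + i)%nat) n) =
   (f s + csum (fun k : nat => f (s + S k)%nat) n)%C).
  replace (csum (fun i => f (S s + i)%nat) n) with (csum (fun k => f (s + S k)%nat) n)
   by (apply csum_ext_lt; intros; f_equal; lia). reflexivity. Qed.

Lemma fold_seq_R (f : nat -> R) s n :
  fold_right Rplus 0 (map f (seq s n)) = rsum (fun i => f (s + i)%nat) n.
Proof. revert s; induction n; intros s. reflexivity.
  cbn [seq map fold_right]. rewrite IHn, rsum_shift. rewrite Nat.add_0_r. f_equal.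
  apply rsum_ext_lt; intros; f_equal; lia. Qed.

Lemma sum_n_Cpartial (f : nat -> C) m : sum_n f m = Cpartial f m.
Proof. induction m. rewrite sum_O; reflexivity. rewrite sum_Sn, IHm; reflexivity. Qed.

Lemma sqrt2_lt_2 : sqrt 2 < 2.
Proof. rewrite <- (sqrt_square 2) at 2 by lra. apply sqrt_lt_1; lra. Qed.

Lemma is_series_cv (f : nat -> C) l : is_series f l -> Cseries_cv f l.
Proof. intros H. unfold is_series in H. pose proof (proj1 (filterlim_locally _ _) H) as H1.
  assert (forall eps, 0 < eps -> exists N, forall n, (N <= n)%nat -> Cmod (Cpartial f n - l) < eps) as H2.
  { intros eps Heps. destruct (H1 (mkposreal (eps / 2) ltac:(lra))) as [N HN]. exists N. intros n Hn.
    specialize (HN n Hn). apply C_NormedModule_mixin_compat2 in HN. simpl in HN.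
    rewrite sum_n_Cpartial in HN. change (minus (Cpartial f n) l) with (Cpartial f n - l)%C in HN.
    eapply Rlt_le_trans. apply HN. pose proof sqrt2_lt_2. nra. }
  split; intros eps Heps; destruct (H2 eps Heps) as [N HN]; exists N; intros n Hn;
   specialize (HN n Hn); unfold R_dist; eapply Rle_lt_trans; try apply HN;
   eapply Rle_trans; try apply Rmax_Cmod.
  apply Rmax_l. apply Rmax_r.
Qed.

Lemma Cseries_cv_eq (f : nat -> C) l : Cseries_cv f l -> Cseries f = l.
Proof. intros H. unfold Cseries.
  pose proof (epsilon_spec (inhabits (Defs.RtoC 0)) (fun l => Cseries_cv f l) (ex_intro _ l H)) as H2.
  set (e := epsilon _ _) in *. destruct H as [Ha Hb]; destruct H2 as [H2a H2b].
  apply injective_projections.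
  eapply UL_sequence; eauto. eapply UL_sequence; eauto. Qed.

Lemma is_series_Cseries (f : nat -> C) l : is_series f l -> Cseries f = l.
Proof. intros; apply Cseries_cv_eq, is_series_cv; auto. Qed.
Lemma is_series_norm_le (a : nat -> C) (b : nat -> R) l s :
  is_series a l -> is_series b s -> (forall n, Cmod (a n) <= b n) -> Cmod l <= s.
Proof. intros Ha Hb H.
  assert (H1 : is_lim_seq (fun n => norm (sum_n a n)) (norm l)).
  { unfold is_lim_seq. eapply filterlim_comp. apply Ha. apply filterlim_norm. }
  assert (H2 : is_lim_seq (sum_n b) s) by exact Hb.
  idtac.
  assert (H3 : forall n, norm (sum_n a n) <= sum_n b n).
  { intros n. unfold sum_n. eapply Rle_trans. exact (norm_sum_n_m (K:=C_AbsRing) (V:=C_NormedModule) a 0 n).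
    apply sum_n_m_le. intros k. exact (H k). }
  pose proof (is_lim_seq_le _ _ _ _ H3 H1 H2). simpl in H0. exact H0. Qed.

Lemma lim_pow_ratio k : is_lim_seq (fun n => (1 + / INR (S n)) ^ k) 1.
Proof. assert (H0 : is_lim_seq (fun n => / INR (S n)) 0).
  { replace (Finite 0) with (Rbar_inv p_infty) by reflexivity.
    apply is_lim_seq_inv. apply (is_lim_seq_incr_1 INR). apply is_lim_seq_INR. discriminate. }
  assert (H1 : is_lim_seq (fun n => 1 + / INR (S n)) 1).
  { pose proof (is_lim_seq_plus' _ _ 1 0 (is_lim_seq_const 1) H0) as H; rewrite Rplus_0_r in H; exact H. }
  induction k. simpl. apply is_lim_seq_const.
  pose proof (is_lim_seq_mult' _ _ _ _ H1 IHk) as H; rewrite Rmult_1_r in H; exact H. Qed.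

Lemma ex_series_poly_geom k q : 0 < q < 1 ->
  ex_series (fun n => INR (S n) ^ k * q ^ S n).
Proof. intros Hq. apply ex_series_Rabs. apply ex_series_DAlembert with q. lra.
  intros n. apply Rmult_integral_contrapositive; split; apply pow_nonzero.
  apply not_0_INR; lia. lra.
  apply is_lim_seq_ext with (fun n => (1 + / INR (S n)) ^ k * q).
  intros n. rewrite Rabs_pos_eq.
  rewrite (S_INR (S n)). 
  assert (0 < INR (S n)) by (apply lt_0_INR; lia).
  replace (INR (S n) + 1) with (INR (S n) * (1 + / INR (S n))) by (field; lra).
  rewrite Rpow_mult_distr. rewrite <- (tech_pow_Rmult q (S n)).
  assert (INR (S n) ^ k <> 0) by (apply pow_nonzero; lra).
  assert (q ^ S n <> 0) by (apply pow_nonzero; lra).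
  set (a := INR (S n) ^ k) in *. set (b := q ^ S n) in *. field. auto.
  apply Rle_mult_inv_pos. apply Rmult_le_pos; apply pow_le; try lra. apply pos_INR.
  apply Rmult_lt_0_compat; apply pow_lt; try lra. apply lt_0_INR; lia.
  pose proof (is_lim_seq_mult' _ _ _ _ (lim_pow_ratio k) (is_lim_seq_const q)) as H; rewrite Rmult_1_l in H; exact H.
Qed.
Lemma MVT_bound (f df : R -> R) a b B : a <= b ->
  (forall x, a <= x <= b -> is_derive f x (df x)) ->
  (forall x, a <= x <= b -> Rabs (df x) <= B) -> Rabs (f b - f a) <= B * (b - a).
Proof. intros Hab Hd HB.
  destruct (MVT_gen f a b df) as [c [Hc Heq]].
  - intros x Hx. rewrite Rmin_left in Hx by lra. rewrite Rmax_right in Hx by lra. apply Hd; lra.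
  - intros x Hx. rewrite Rmin_left in Hx by lra. rewrite Rmax_right in Hx by lra.
    apply continuity_pt_filterlim. apply (ex_derive_continuous f). eexists; apply Hd; lra.
  - rewrite Rmin_left in Hc by lra. rewrite Rmax_right in Hc by lra.
    rewrite Heq, Rabs_mult, (Rabs_pos_eq (b - a)) by lra.
    apply Rmult_le_compat_r. lra. apply HB; lra. Qed.

Definition Cder (f : R -> C) (t : R) (d : C) :=
  is_derive (fun s => fst (f s)) t (fst d) /\ is_derive (fun s => snd (f s)) t (snd d).

Lemma Cder_minus f g t df dg : Cder f t df -> Cder g t dg -> Cder (fun s => f s - g s)%C t (df - dg)%C.
Proof. intros [H1 H2] [H3 H4]; split; simpl.
  apply (is_derive_minus (fun s => fst (f s)) (fun s => fst (g s))); auto.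
  apply (is_derive_minus (fun s => snd (f s)) (fun s => snd (g s))); auto. Qed.

Lemma Cder_exp (y : C) t : Cder (fun s => CE (RtoC s * y)) t (y * CE (RtoC t * y))%C.
Proof. destruct y as [a b]. unfold CE, Defs.Cexp, Defs.Re, Defs.Im. split; simpl.
  - apply is_derive_ext with (fun s => exp (s * a) * cos (s * b)).
    intros s; simpl; repeat rewrite Rmult_0_l; rewrite Rminus_0_r, Rplus_0_r; reflexivity.
    replace (a * (exp (t * a - 0 * b) * cos (t * b + 0 * a)) - b * (exp (t * a - 0 * b) * sin (t * b + 0 * a)))
      with (a * (exp (t * a) * cos (t * b)) - b * (exp (t * a) * sin (t * b))).
    auto_derive. auto. ring. repeat rewrite Rmult_0_l; rewrite Rminus_0_r, Rplus_0_r; reflexivity.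
  - apply is_derive_ext with (fun s => exp (s * a) * sin (s * b)).
    intros s; simpl; repeat rewrite Rmult_0_l; rewrite Rminus_0_r, Rplus_0_r; reflexivity.
    replace (a * (exp (t * a - 0 * b) * sin (t * b + 0 * a)) + b * (exp (t * a - 0 * b) * cos (t * b + 0 * a)))
      with (a * (exp (t * a) * sin (t * b)) + b * (exp (t * a) * cos (t * b))).
    auto_derive. auto. ring. repeat rewrite Rmult_0_l; rewrite Rminus_0_r, Rplus_0_r; reflexivity.
Qed.

Lemma rsum_derive (c : nat -> R) n t :
  is_derive (fun s => rsum (fun k => s ^ k * c k) n) t (rsum (fun k => INR k * t ^ (pred k) * c k) n).
Proof. induction n; simpl. auto_derive; auto.
  apply (is_derive_plus (fun s => rsum (fun k => s ^ k * c k) n) (fun s => s ^ n * c n)). auto.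
  auto_derive. auto. ring. Qed.

Lemma Cder_poly (c : nat -> C) n t :
  Cder (fun s => csum (fun k => RtoC (s ^ k) * c k) n)%C t
       (csum (fun k => RtoC (INR k * t ^ (pred k)) * c k) n)%C.
Proof. split.
  - apply is_derive_ext with (fun s => rsum (fun k => s ^ k * fst (c k)) n).
    intros s. rewrite fst_csum. induction n; simpl; auto. rewrite IHn. f_equal. ring.
    rewrite fst_csum. replace (rsum (fun k => fst (RtoC (INR k * t ^ pred k) * c k)%C) n)
      with (rsum (fun k => INR k * t ^ (pred k) * fst (c k)) n). apply rsum_derive.
    clear; induction n; simpl; auto. rewrite IHn. f_equal. ring.
  - apply is_derive_ext with (fun s => rsum (fun k => s ^ k * snd (c k)) n).
    intros s. rewrite snd_csum. induction n; simpl; auto. rewrite IHn. f_equal. ring.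
    rewrite snd_csum. replace (rsum (fun k => snd (RtoC (INR k * t ^ pred k) * c k)%C) n)
      with (rsum (fun k => INR k * t ^ (pred k) * snd (c k)) n). apply rsum_derive.
    clear; induction n; simpl; auto. rewrite IHn. f_equal. ring.
Qed.

Lemma Cmod_le_sum : forall z : C, Cmod z <= Rabs (fst z) + Rabs (snd z).
Proof. intros [a b]; unfold Cmod; simpl.
  pose proof (Rabs_pos a); pose proof (Rabs_pos b).
  apply Rsqr_incr_0_var. rewrite Rsqr_sqrt. unfold Rsqr.
  pose proof (Rsqr_abs a) as Ha; pose proof (Rsqr_abs b) as Hb. unfold Rsqr in Ha, Hb. nra.
  nra. lra. Qed.

Lemma CMVT (f df : R -> C) t B : 0 <= t ->
  (forall s, 0 <= s <= t -> Cder f s (df s)) ->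
  (forall s, 0 <= s <= t -> Cmod (df s) <= B) -> Cmod (f t - f 0)%C <= 2 * B * t.
Proof. intros Ht Hd HB. eapply Rle_trans. apply Cmod_le_sum.
  assert (Rabs (fst (f t) - fst (f 0)) <= B * (t - 0)).
  { apply (MVT_bound (fun s => fst (f s)) (fun s => fst (df s))). lra.
    intros; apply Hd; lra. intros x Hx. eapply Rle_trans. 2: apply (HB x Hx).
    eapply Rle_trans. 2: apply Rmax_Cmod. apply Rmax_l. }
  assert (Rabs (snd (f t) - snd (f 0)) <= B * (t - 0)).
  { apply (MVT_bound (fun s => snd (f s)) (fun s => snd (df s))). lra.
    intros; apply Hd; lra. intros x Hx. eapply Rle_trans. 2: apply (HB x Hx).
    eapply Rle_trans. 2: apply Rmax_Cmod. apply Rmax_r. }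
  replace (fst (f t - f 0)%C) with (fst (f t) - fst (f 0)) by (simpl; ring).
  replace (snd (f t - f 0)%C) with (snd (f t) - snd (f 0)) by (simpl; ring). lra. Qed.
Definition ecoef (y : C) (k : nat) : C := (Cpow y k * RtoC (/ INR (fact k)))%C.
Definition Gx (y : C) (n : nat) (t : R) : C :=
  (CE (RtoC t * y) - csum (fun k => RtoC (t ^ k) * ecoef y k) n)%C.

Lemma csum_zero f n : (forall k, (k < n)%nat -> f k = RtoC 0) -> csum f n = RtoC 0.
Proof. induction n; intros H; simpl; auto. rewrite IHn, H by auto. ring. Qed.

Lemma deriv_poly_exp y t n :
  csum (fun k => RtoC (INR k * t ^ (pred k)) * ecoef y k)%C (S n) =
  (y * csum (fun k => RtoC (t ^ k) * ecoef y k) n)%C.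
Proof. induction n.
  - simpl. unfold ecoef. rewrite Rmult_0_l. ring.
  - change (csum (fun k => RtoC (INR k * t ^ (pred k)) * ecoef y k)%C (S (S n)))
      with (csum (fun k => RtoC (INR k * t ^ (pred k)) * ecoef y k)%C (S n) +
            RtoC (INR (S n) * t ^ n) * ecoef y (S n))%C.
    rewrite IHn. simpl csum at 2. unfold ecoef.
    assert (Hr : INR (S n) * t ^ n * / INR (fact (S n)) = t ^ n * / INR (fact n)).
    { rewrite fact_simpl, mult_INR. assert (INR (S n) <> 0) by (apply not_0_INR; lia).
      assert (INR (fact n) <> 0) by (apply not_0_INR, fact_neq_0). field; auto. }
    replace (RtoC (INR (S n) * t ^ n) * (Cpow y (S n) * RtoC (/ INR (fact (S n)))))%C
      with (RtoC (INR (S n) * t ^ n * / INR (fact (S n))) * Cpow y (S n))%C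
      by (rewrite !RtoC_mult; ring).
    rewrite Hr, RtoC_mult. simpl Cpow. ring.
Qed.

Lemma Cder_Gx y n t : Cder (Gx y (S n)) t (y * Gx y n t)%C.
Proof. unfold Gx. replace (y * (CE (RtoC t * y) - csum (fun k => RtoC (t ^ k) * ecoef y k) n))%C
  with (y * CE (RtoC t * y) - csum (fun k => RtoC (INR k * t ^ (pred k)) * ecoef y k)%C (S n))%C
  by (rewrite deriv_poly_exp; ring).
  apply Cder_minus. apply Cder_exp. apply Cder_poly. Qed.

Lemma Gx_0 y n : Gx y (S n) 0 = RtoC 0.
Proof. unfold Gx. rewrite csum_shift. rewrite csum_zero.
  replace (RtoC 0 * y)%C with (RtoC 0) by ring. change (CE (RtoC 0)) with (CE 0%C). rewrite CE_0.
  unfold ecoef. simpl. rewrite Rinv_1. ring.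
  intros k _. simpl. rewrite Rmult_0_l. ring. Qed.

Lemma exp_le_mono x y : x <= y -> exp x <= exp y.
Proof. intros [H|H]. left; apply exp_increasing; auto. subst; lra. Qed.

Lemma Gx_bound y n t : 0 <= t <= 1 ->
  Cmod (Gx y n t) <= 2 ^ n * exp (Cmod y) * (t * Cmod y) ^ n.
Proof. revert t; induction n; intros t Ht.
  - unfold Gx; simpl csum. replace (CE (RtoC t * y) - RtoC 0)%C with (CE (RtoC t * y)) by ring.
    rewrite Cmod_CE. simpl pow. rewrite !Rmult_1_l, Rmult_1_r. apply exp_le_mono.
    pose proof (re_le_Cmod y) as H. destruct y as [a b]. simpl in *.
    pose proof (Rle_abs a). pose proof (Rabs_pos a).
    replace (t * a - 0 * b) with (t * a) by ring.
    destruct (Rle_dec 0 a); nra.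
  - replace (Gx y (S n) t) with (Gx y (S n) t - Gx y (S n) 0)%C by (rewrite Gx_0; ring).
    eapply Rle_trans.
    apply (CMVT (Gx y (S n)) (fun s => y * Gx y n s)%C t (Cmod y * (2 ^ n * exp (Cmod y) * (t * Cmod y) ^ n))).
    lra. intros; apply Cder_Gx.
    intros s Hs. rewrite Cmod_mult. apply Rmult_le_compat_l. apply Cmod_ge_0.
    eapply Rle_trans. apply IHn. lra. apply Rmult_le_compat_l.
    apply Rmult_le_pos. apply pow_le; lra. left; apply exp_pos.
    apply pow_incr. split. apply Rmult_le_pos. lra. apply Cmod_ge_0.
    apply Rmult_le_compat_r. apply Cmod_ge_0. lra.
    simpl pow. pose proof (Cmod_ge_0 y). ring_simplify. lra.
Qed.
Lemma bern_len k : length (bern_list k) = S k.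
Proof. induction k; simpl; auto. rewrite length_app, IHk. simpl. lia. Qed.

Lemma bern_prefix j k : (j <= k)%nat -> nth j (bern_list k) 0 = bernoulli j.
Proof. intros H. induction H. reflexivity.
  simpl. rewrite app_nth1; auto. rewrite bern_len. lia. Qed.

Lemma bern_list_S k : bern_list (S k) = bern_list k ++
  (- / INR (S k + 1) * fold_right Rplus 0 (map (fun j => Binomial.C (S k + 1) j * nth j (bern_list k) 0) (seq 0 (S k)))) :: nil.
Proof. reflexivity. Qed.

Lemma bern_S k : bernoulli (S k) =
  - / INR (S k + 1) * rsum (fun j => Binomial.C (S k + 1) j * bernoulli j) (S k).
Proof. unfold bernoulli at 1. rewrite bern_list_S.
  rewrite <- (bern_len k) at 1. rewrite nth_middle. f_equal.
  rewrite fold_seq_R. apply rsum_ext_lt. intros j Hj. simpl. rewrite bern_prefix; auto. lia. Qed.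

Definition bb (n : nat) : R := bernoulli n / INR (fact n).

Lemma bb_0 : bb 0 = 1.
Proof. unfold bb, bernoulli. simpl. field. Qed.

Lemma fact_nz n : INR (fact n) <> 0.
Proof. apply not_0_INR, fact_neq_0. Qed.

Lemma bb_rec m : (1 <= m)%nat ->
  rsum (fun j => bb j / INR (fact (S m - j))) (S m) = 0.
Proof. intros Hm. destruct m as [|k]. lia.
  set (m := S k).
  assert (Hb := bern_S k). fold m in Hb. rewrite Nat.add_1_r in Hb.
  assert (HT : rsum (fun j => Binomial.C (S m) j * bernoulli j) m =
               INR (fact (S m)) * rsum (fun j => bb j / INR (fact (S m - j))) m).
  { rewrite <- rsum_scal. apply rsum_ext_lt. intros j Hj. unfold Binomial.C, bb.
    pose proof (fact_nz j); pose proof (fact_nz (S m - j)). field. auto. }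
  rewrite HT in Hb. change (rsum (fun j => bb j / INR (fact (S m - j))) (S m)) with
    (rsum (fun j => bb j / INR (fact (S m - j))) m + bb m / INR (fact (S m - m))).
  replace (S m - m)%nat with 1%nat by lia. unfold bb at 2. rewrite Hb.
  rewrite fact_simpl. rewrite mult_INR. simpl (INR (fact 1)).
  assert (INR (S m) <> 0) by (apply not_0_INR; lia). pose proof (fact_nz m). field. auto.
Qed.
Definition Tx (y : C) (j : nat) : C := csum (ecoef y) (S j).

Lemma Tx_S y j : Tx y (S j) = (Tx y j + ecoef y (S j))%C.
Proof. reflexivity. Qed.

Lemma Tx_0 y : Tx y 0 = RtoC 1.
Proof. unfold Tx, ecoef; simpl. rewrite Rinv_1. ring. Qed.

Lemma Gx_1 y j : Gx y (S j) 1 = (CE y - Tx y j)%C.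
Proof. unfold Gx, Tx. replace (RtoC 1 * y)%C with y by ring. f_equal.
  apply csum_ext_lt. intros k _. rewrite pow1. ring. Qed.

Definition Wx (y : C) (L : nat) : C :=
  csum (fun n => RtoC (bb n) * Cpow y n * (Tx y (S L - n) - 1))%C (S L).

Lemma csum_RtoC h n : csum (fun k => RtoC (h k)) n = RtoC (rsum h n).
Proof. induction n; simpl; auto. rewrite IHn, RtoC_plus. reflexivity. Qed.

Lemma csum_mulr f k n : csum (fun i => f i * k)%C n = (csum f n * k)%C.
Proof. induction n; simpl. ring. rewrite IHn. ring. Qed.

Lemma Wx_eq y L : Wx y L = y.
Proof. induction L.
  - unfold Wx. simpl. rewrite bb_0. unfold Tx, ecoef. simpl. rewrite !Rinv_1. ring.
  - unfold Wx in *.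
    rewrite (csum_ext_lt _ (fun n => (RtoC (bb n) * Cpow y n * (Tx y (S L - n) - 1)) +
        RtoC (bb n / INR (fact (S (S L) - n))) * Cpow y (S (S L)))%C).
    + rewrite csum_plus, csum_mulr, csum_RtoC, bb_rec by lia.
      change (csum (fun n => RtoC (bb n) * Cpow y n * (Tx y (S L - n) - 1))%C (S (S L))) with
        (csum (fun n => RtoC (bb n) * Cpow y n * (Tx y (S L - n) - 1))%C (S L) +
         RtoC (bb (S L)) * Cpow y (S L) * (Tx y (S L - S L) - 1))%C.
      rewrite IHL, Nat.sub_diag, Tx_0. ring.
    + intros n Hn. replace (S (S L) - n)%nat with (S (S L - n)) by lia.
      rewrite Tx_S. unfold ecoef. 
      replace (Cpow y (S (S L))) with (Cpow y n * Cpow y (S (S L - n)))%C.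
      unfold Rdiv. rewrite RtoC_mult. ring.
      rewrite <- Cpow_add_r. f_equal. lia.
Qed.

Lemma rsum_scal_r k f n : rsum (fun i => f i * k) n = rsum f n * k.
Proof. induction n; simpl. ring. rewrite IHn. ring. Qed.

Lemma csum_opp f n : csum (fun i => - f i)%C n = (- csum f n)%C.
Proof. induction n; simpl. ring. rewrite IHn. ring. Qed.

Definition Qx (L : nat) (y : C) : C := csum (fun n => RtoC (bb n) * Cpow y n)%C (S L).

Lemma D_eq y L : (y - (CE y - 1) * Qx L y)%C =
  (- csum (fun n => RtoC (bb n) * Cpow y n * Gx y (S (S L - n)) 1) (S L))%C.
Proof. rewrite <- (Wx_eq y L) at 1. unfold Wx, Qx.
  rewrite Cmult_comm, <- csum_mulr, <- csum_minus, <- csum_opp.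
  apply csum_ext_lt. intros n _. rewrite Gx_1. ring. Qed.

Definition Bs (L : nat) : R := rsum (fun n => Rabs (bb n)) (S L).

Lemma Bs_nonneg L : 0 <= Bs L.
Proof. apply rsum_nonneg. intros; apply Rabs_pos. Qed.

Lemma D_bound y L : Cmod y <= 1 ->
  Cmod (y - (CE y - 1) * Qx L y)%C <= Bs L * 2 ^ (S (S L)) * 3 * Cmod y ^ (S (S L)).
Proof. intros Hy. rewrite D_eq, Cmod_opp. eapply Rle_trans. apply Cmod_csum.
  unfold Bs. rewrite <- !rsum_scal_r. apply rsum_le. intros n Hn.
  rewrite !Cmod_mult, Cmod_R, Cmod_pow. pose proof (Cmod_ge_0 y) as H0.
  eapply Rle_trans. apply Rmult_le_compat_l. apply Rmult_le_pos. apply Rabs_pos. apply pow_le; auto.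
  apply Gx_bound. lra.
  replace (S (S L)) with (n + S (S L - n))%nat at 2 by lia. rewrite pow_add.
  rewrite Rmult_1_l.
  assert (2 ^ S (S L - n) <= 2 ^ S (S L)) by (apply Rle_pow; lia || lra).
  assert (exp (Cmod y) <= 3) by (eapply Rle_trans; [apply exp_le_mono; apply Hy | apply exp_le_3]).
  pose proof (pow_le _ n H0). pose proof (pow_le _ (S (S L - n)) H0). pose proof (Rabs_pos (bb n)).
  pose proof (exp_pos (Cmod y)). pose proof (pow_le 2 (S (S L - n))).
  set (a := Rabs (bb n)) in *. set (p := Cmod y ^ n) in *. set (q := Cmod y ^ S (S L - n)) in *.
  set (e := exp (Cmod y)) in *. set (t1 := 2 ^ S (S L - n)) in *. set (t2 := 2 ^ S (S L)) in *.
  assert (0 <= a * p) by nra. assert (0 <= t1 * e) by nra.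
  apply Rle_trans with (a * p * (t2 * 3 * q)). apply Rmult_le_compat_l. auto.
  apply Rmult_le_compat_r. auto. apply Rmult_le_compat; lra. 
  lra.
Qed.

Definition RLx (L : nat) (y : C) : C := (/ (CE y - 1) - Qx L y / y)%C.

Lemma Cmod_E_lb y : 0 < - Re y -> - Re y / (1 + - Re y) <= Cmod (CE y - 1)%C.
Proof. intros Ha. set (a := - Re y) in *.
  assert (H1 : Cmod (RtoC 1) <= Cmod (CE y) + Cmod (CE y - 1)%C).
  { set (E := (CE y - 1)%C). replace (RtoC 1) with (CE y + - E)%C by (unfold E; ring).
    apply Rle_trans with (Cmod (CE y) + Cmod (- E)%C). apply Cmod_triangle.
    rewrite Cmod_opp. lra. }
  rewrite Cmod_1, Cmod_CE in H1. replace (Re y) with (- a) in H1 by (unfold a; ring).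
  rewrite exp_Ropp in H1. pose proof (exp_ineq1_le a). pose proof (exp_pos a).
  assert (/ exp a <= / (1 + a)) by (apply Rinv_le_contravar; lra).
  replace (a / (1 + a)) with (1 - / (1 + a)) by (field; lra). lra. Qed.

Lemma Cmod_Qx_le L y : 1 <= Cmod y -> Cmod (Qx L y) <= Bs L * Cmod y ^ L.
Proof. intros Hy. unfold Qx, Bs. eapply Rle_trans. apply Cmod_csum. rewrite <- rsum_scal_r.
  apply rsum_le. intros n Hn. rewrite Cmod_mult, Cmod_R, Cmod_pow.
  apply Rmult_le_compat_l. apply Rabs_pos. apply Rle_pow; auto. lia. Qed.

Lemma RL_bound L m : 0 < m -> exists A, 0 <= A /\ forall y : C, Re y < 0 -> Cmod y <= m * - Re y ->
  Cmod (RLx L y) <= A * Cmod y ^ L.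
Proof. intros Hm. set (K1 := Bs L * 2 ^ (S (S L)) * 3).
  assert (HK1 : 0 <= K1) by (unfold K1; pose proof (Bs_nonneg L); pose proof (pow_le 2 (S (S L))); nra).
  exists (2 * m * K1 + (m + 1) + Bs L). split. pose proof (Bs_nonneg L). nra.
  intros y Hre Hs. set (a := - Re y) in *. set (s := Cmod y) in *.
  assert (Ha : 0 < a) by (unfold a; lra).
  assert (Has : a <= s).
  { unfold a, s. pose proof (re_le_Cmod y) as H. rewrite Rabs_left in H by lra. lra. }
  assert (Hs0 : 0 < s) by lra.
  assert (Hy0 : y <> RtoC 0) by (intros H; unfold s in Hs0; rewrite H, Cmod_0 in Hs0; lra).
  pose proof (Cmod_E_lb y Ha) as HE. fold a in HE.
  assert (HE0 : 0 < Cmod (CE y - 1)%C) by (eapply Rlt_le_trans; [|apply HE]; apply Rdiv_lt_0_compat; lra).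
  assert (HEn : (CE y - 1)%C <> RtoC 0) by (intros H; rewrite H, Cmod_0 in HE0; lra).
  pose proof (Bs_nonneg L) as HB.
  destruct (Rle_lt_dec s 1) as [Hs1 | Hs1].
  -
    assert (Heq : RLx L y = ((y - (CE y - 1) * Qx L y) / (y * (CE y - 1)))%C).
    { unfold RLx. field. split; auto. }
    rewrite Heq, Cmod_div, Cmod_mult by (apply Cmult_neq_0; auto). fold s.
    pose proof (D_bound y L Hs1) as HD. fold s K1 in HD. fold K1 in HD.
    assert (HEl : s / (2 * m) <= Cmod (CE y - 1)%C).
    { eapply Rle_trans. 2: apply HE. apply Rle_trans with (a / 2).
      apply Rmult_le_reg_r with (2 * m). lra. field_simplify; nra.
      apply Rmult_le_compat_l. lra. apply Rinv_le_contravar; lra. }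
    apply Rle_trans with (K1 * s ^ S (S L) / (s * (s / (2 * m)))).
    + unfold Rdiv. apply Rmult_le_compat. apply Cmod_ge_0. left; apply Rinv_0_lt_compat. nra. auto.
      apply Rinv_le_contravar. apply Rmult_lt_0_compat; auto. apply Rdiv_lt_0_compat; lra.
      apply Rmult_le_compat_l; lra.
    + replace (K1 * s ^ S (S L) / (s * (s / (2 * m)))) with (2 * m * K1 * s ^ L)
        by (simpl; field; split; lra).
      pose proof (pow_le s L (Rlt_le _ _ Hs0)). nra.
  -
    unfold RLx. eapply Rle_trans. unfold Cminus. apply Cmod_triangle. rewrite Cmod_opp.
    rewrite Cmod_inv by auto. rewrite Cmod_div by auto. fold s.
    assert (Hinv : / Cmod (CE y - 1)%C <= m + 1).
    { assert (Ha2 : 1 / m <= a) by (apply Rmult_le_reg_r with m; auto; field_simplify; nra).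
      apply Rle_trans with ((1 + a) / a).
      replace ((1 + a) / a) with (/ (a / (1 + a))) by (field; lra).
      apply Rinv_le_contravar. apply Rdiv_lt_0_compat; lra. auto.
      replace ((1 + a) / a) with (1 + / a) by (field; lra).
      assert (/ a <= m). { replace m with (/ (1 / m)) by (field; lra). apply Rinv_le_contravar.
        apply Rdiv_lt_0_compat; lra. auto. } lra. }
    assert (HQ : Cmod (Qx L y) / s <= Bs L * s ^ L).
    { pose proof (Cmod_Qx_le L y (Rlt_le _ _ Hs1)) as H. fold s in H.
      apply Rle_trans with (Cmod (Qx L y)). unfold Rdiv.
      pose proof (Cmod_ge_0 (Qx L y)). 
      assert (/ s <= 1) by (replace 1 with (/1) by lra; apply Rinv_le_contravar; lra). nra. auto. }
    assert (1 <= s ^ L) by (apply pow_R1_Rle; lra).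
    change (CE y + - (1))%C with (CE y - 1)%C.
    assert (0 <= 2 * m * K1 * s ^ L) by (apply Rmult_le_pos; nra).
    assert (m + 1 <= (m + 1) * s ^ L) by nra. nra.
Qed.
Lemma der_ln a b t : 0 < 1 - t * a ->
  is_derive (fun s => ln (sqrt ((1 - s * a) ^ 2 + (s * b) ^ 2))) t
    ((- a + t * (a * a + b * b)) / ((1 - t * a) ^ 2 + (t * b) ^ 2)).
Proof. intros H. assert (0 < (1 - t * a) ^ 2 + (t * b) ^ 2) by nra.
  auto_derive. split. lra. split. apply sqrt_lt_R0; lra. auto.
  replace ((1 + - (t * a)) * ((1 + - (t * a)) * 1) + t * b * (t * b * 1)) with ((1 - t * a) ^ 2 + (t * b) ^ 2) by ring.
  set (Q := (1 - t * a) ^ 2 + (t * b) ^ 2) in *.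
  assert (Hr : 0 < sqrt Q) by (apply sqrt_lt_R0; lra).
  assert (HQ : Q = sqrt Q * sqrt Q) by (rewrite sqrt_sqrt; lra).
  set (r := sqrt Q) in *. clearbody r. rewrite HQ. field. lra. Qed.

Lemma der_atan a b t : 0 < 1 - t * a ->
  is_derive (fun s => atan (- (s * b) / (1 - s * a))) t
    (- b / ((1 - t * a) ^ 2 + (t * b) ^ 2)).
Proof. intros H. assert (0 < (1 - t * a) ^ 2 + (t * b) ^ 2) by nra.
  auto_derive. lra. field. split; lra. Qed.

Definition lc (u : C) (k : nat) : C :=
  match k with O => RtoC 0 | S j => (Cpow u (S j) * RtoC (/ INR (S j)))%C end.
Definition lf (u : C) (n : nat) : C := (Cpow u (S n) * RtoC (/ INR (S n)))%C.
Definition phiM (u : C) (M : nat) (t : R) : C := csum (fun k => RtoC (t ^ k) * lc u k)%C (S M).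
Definition geo (u : C) (M : nat) (t : R) : C := csum (fun k => RtoC (t ^ k) * Cpow u (S k))%C M.

Lemma lc_S u j : lc u (S j) = (Cpow u (S j) * RtoC (/ INR (S j)))%C.
Proof. reflexivity. Qed.

Lemma phiM_der u M t : csum (fun k => RtoC (INR k * t ^ pred k) * lc u k)%C (S M) = geo u M t.
Proof. rewrite csum_shift. change (lc u 0) with (RtoC 0). replace (RtoC (INR 0 * t ^ pred 0) * RtoC 0)%C with (RtoC 0) by ring.
  rewrite Cplus_0_l. apply csum_ext_lt. intros k _. rewrite lc_S. cbn [pred].
  assert (INR (S k) <> 0) by (apply not_0_INR; lia).
  replace (RtoC (INR (S k) * t ^ k) * (Cpow u (S k) * RtoC (/ INR (S k))))%C with
    (RtoC (INR (S k) * / INR (S k)) * RtoC (t ^ k) * Cpow u (S k))%C by (rewrite !RtoC_mult; ring).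
  rewrite Rinv_r by auto. ring. Qed.

Lemma geo_id u M t : (geo u M t * (1 - RtoC t * u))%C = (u * (1 - Cpow (RtoC t * u) M))%C.
Proof. induction M. unfold geo. cbn [csum Cpow]. ring.
  change (geo u (S M) t) with (geo u M t + RtoC (t ^ M) * Cpow u (S M))%C.
  rewrite Cmult_plus_distr_r, IHM. rewrite !Cpow_mult_l, <- !RtoC_pow. cbn [Cpow pow]. rewrite RtoC_mult. ring. Qed.

Lemma phiM_0 u M : phiM u M 0 = RtoC 0.
Proof. unfold phiM. rewrite csum_shift, csum_zero. simpl. ring.
  intros k _. simpl. rewrite Rmult_0_l. ring. Qed.

Lemma phiM_1 u M : phiM u M 1 = csum (lf u) M.
Proof. unfold phiM. rewrite csum_shift. change (lc u 0) with (RtoC 0). rewrite Cmult_0_r, Cplus_0_l.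
  apply csum_ext_lt. intros k _. rewrite pow1, lc_S. unfold lf. ring. Qed.

Lemma sum_n_csum (f : nat -> C) n : sum_n f n = csum f (S n).
Proof. induction n. rewrite sum_O. simpl. ring. rewrite sum_Sn, IHn. reflexivity. Qed.

Lemma fst_div_1mtu u t : 0 < 1 - t * fst u ->
  fst (- u / (1 - RtoC t * u))%C =
  (- fst u + t * (fst u * fst u + snd u * snd u)) / ((1 - t * fst u) ^ 2 + (t * snd u) ^ 2).
Proof. destruct u as [a b]; simpl; intros H.
  assert (0 < (1 - t * a) ^ 2 + (t * b) ^ 2) by nra.
  replace ((1 - (t * a - 0 * b)) * ((1 - (t * a - 0 * b)) * 1) + (0 - (t * b + 0 * a)) * ((0 - (t * b + 0 * a)) * 1))
    with ((1 - t * a) ^ 2 + (t * b) ^ 2) by ring.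
  field. lra. Qed.

Lemma snd_div_1mtu u t : 0 < 1 - t * fst u ->
  snd (- u / (1 - RtoC t * u))%C = - snd u / ((1 - t * fst u) ^ 2 + (t * snd u) ^ 2).
Proof. destruct u as [a b]; simpl; intros H.
  assert (0 < (1 - t * a) ^ 2 + (t * b) ^ 2) by nra.
  replace ((1 - (t * a - 0 * b)) * ((1 - (t * a - 0 * b)) * 1) + (0 - (t * b + 0 * a)) * ((0 - (t * b + 0 * a)) * 1))
    with ((1 - t * a) ^ 2 + (t * b) ^ 2) by ring.
  field. lra. Qed.

Definition Zf (u : C) (M : nat) (t : R) : C := (- u * Cpow (RtoC t * u) M / (1 - RtoC t * u))%C.

Lemma Zf_eq u M t : (1 - RtoC t * u)%C <> RtoC 0 ->
  Zf u M t = (- u / (1 - RtoC t * u) + geo u M t)%C.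
Proof. intros H. assert (Hg : geo u M t = (u * (1 - Cpow (RtoC t * u) M) / (1 - RtoC t * u))%C).
  { rewrite <- geo_id. field. auto. }
  rewrite Hg. unfold Zf. field. auto. Qed.

Lemma Cmod_1mtu_lb u t : 0 <= t <= 1 -> 1 - Cmod u <= Cmod (1 - RtoC t * u)%C.
Proof. intros Ht. assert (H : Cmod (RtoC 1) <= Cmod (1 - RtoC t * u)%C + Cmod (RtoC t * u)%C).
  { set (w := (1 - RtoC t * u)%C). replace (RtoC 1) with (w + RtoC t * u)%C by (unfold w; ring).
    apply Cmod_triangle. }
  rewrite Cmod_mult, !Cmod_R, Rabs_R1, (Rabs_pos_eq t) in H by lra.
  pose proof (Cmod_ge_0 u). nra. Qed.

Lemma Zf_bound u M t : Cmod u < 1 -> 0 <= t <= 1 ->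
  Cmod (Zf u M t) <= Cmod u ^ S M / (1 - Cmod u).
Proof. intros Hu Ht. pose proof (Cmod_1mtu_lb u t Ht) as Hl. pose proof (Cmod_ge_0 u).
  assert (Hw : (1 - RtoC t * u)%C <> RtoC 0) by (intros E; rewrite E, Cmod_0 in Hl; lra).
  unfold Zf. rewrite Cmod_div, Cmod_mult, Cmod_opp, Cmod_pow, Cmod_mult, Cmod_R, Rabs_pos_eq by (auto || lra).
  simpl pow. unfold Rdiv. apply Rmult_le_compat. 
  apply Rmult_le_pos; auto. apply pow_le. nra.
  left; apply Rinv_0_lt_compat; lra.
  apply Rmult_le_compat_l; auto. apply pow_incr. split. nra. nra.
  apply Rinv_le_contravar; lra. Qed.

Lemma small_zero c : (forall eps, 0 < eps -> Rabs c <= eps) -> c = 0.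
Proof. intros H. destruct (Req_dec c 0) as [E|E]; auto.
  pose proof (Rabs_pos_lt c E). specialize (H (Rabs c / 2) ltac:(lra)). lra. Qed.

Lemma fst_plusC (x y : C) : fst (x + y)%C = fst x + fst y.
Proof. reflexivity. Qed.
Lemma snd_plusC (x y : C) : snd (x + y)%C = snd x + snd y.
Proof. reflexivity. Qed.

Lemma log_bounds u M : Cmod u < 1 ->
  Rabs (ln (sqrt ((1 - 1 * fst u) ^ 2 + (1 * snd u) ^ 2)) + fst (csum (lf u) M)) <= Cmod u ^ S M / (1 - Cmod u) /\
  Rabs (atan (- (1 * snd u) / (1 - 1 * fst u)) + snd (csum (lf u) M)) <= Cmod u ^ S M / (1 - Cmod u).
Proof. intros Hu. set (a := fst u). set (b := snd u).
  assert (Hpos : forall t, 0 <= t <= 1 -> 0 < 1 - t * a).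
  { intros t Ht. pose proof (re_le_Cmod u). unfold a. pose proof (Rle_abs (fst u)). 
    change (Re u) with (fst u) in *. destruct (Rle_dec 0 (fst u)); nra. }
  assert (Hw : forall t, 0 <= t <= 1 -> (1 - RtoC t * u)%C <> RtoC 0).
  { intros t Ht E. pose proof (Cmod_1mtu_lb u t Ht). rewrite E, Cmod_0 in H. lra. }
  set (Q := fun t => (1 - t * a) ^ 2 + (t * b) ^ 2).
  set (B := Cmod u ^ S M / (1 - Cmod u)).
  assert (HZ : forall t, 0 <= t <= 1 -> Cmod (Zf u M t) <= B) by (intros; apply Zf_bound; auto).
  assert (HZe : forall t, 0 <= t <= 1 -> Zf u M t = (- u / (1 - RtoC t * u) + geo u M t)%C) by (intros; apply Zf_eq; auto).
  assert (Hder : forall t, Cder (phiM u M) t (geo u M t)).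
  { intros t. rewrite <- phiM_der. apply Cder_poly. }
  split.
  - replace (ln (sqrt ((1 - 1 * a) ^ 2 + (1 * b) ^ 2)) + fst (csum (lf u) M)) with
      ((ln (sqrt ((1 - 1 * a) ^ 2 + (1 * b) ^ 2)) + fst (phiM u M 1)) -
       (ln (sqrt ((1 - 0 * a) ^ 2 + (0 * b) ^ 2)) + fst (phiM u M 0))).
    2: { rewrite phiM_0, phiM_1. replace ((1 - 0 * a) ^ 2 + (0 * b) ^ 2) with 1 by ring.
         rewrite sqrt_1, ln_1. simpl. ring. }
    replace B with (B * (1 - 0)) by ring.
    apply (MVT_bound (fun t => ln (sqrt ((1 - t * a) ^ 2 + (t * b) ^ 2)) + fst (phiM u M t))
             (fun t => (- a + t * (a * a + b * b)) / Q t + fst (geo u M t))). lra.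
    + intros t Ht. apply (is_derive_plus (fun t => ln (sqrt ((1 - t * a) ^ 2 + (t * b) ^ 2))) (fun t => fst (phiM u M t))).
      apply der_ln. auto. apply Hder.
    + intros t Ht. eapply Rle_trans. 2: apply (HZ t Ht). eapply Rle_trans. 2: apply Rmax_Cmod.
      eapply Rle_trans. 2: apply Rmax_l. rewrite HZe by auto. rewrite fst_plusC.
      rewrite fst_div_1mtu by auto. apply Req_le. reflexivity.
  - replace (atan (- (1 * b) / (1 - 1 * a)) + snd (csum (lf u) M)) with
      ((atan (- (1 * b) / (1 - 1 * a)) + snd (phiM u M 1)) -
       (atan (- (0 * b) / (1 - 0 * a)) + snd (phiM u M 0))).
    2: { rewrite phiM_0, phiM_1. replace (- (0 * b) / (1 - 0 * a)) with 0 by (field; lra).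
         rewrite atan_0. simpl. ring. }
    replace B with (B * (1 - 0)) by ring.
    apply (MVT_bound (fun t => atan (- (t * b) / (1 - t * a)) + snd (phiM u M t))
             (fun t => - b / Q t + snd (geo u M t))). lra.
    + intros t Ht. apply (is_derive_plus (fun t => atan (- (t * b) / (1 - t * a))) (fun t => snd (phiM u M t))).
      apply der_atan. auto. apply Hder.
    + intros t Ht. eapply Rle_trans. 2: apply (HZ t Ht). eapply Rle_trans. 2: apply Rmax_Cmod.
      eapply Rle_trans. 2: apply Rmax_r. rewrite HZe by auto. rewrite snd_plusC.
      rewrite snd_div_1mtu by auto. apply Req_le. reflexivity.
Qed.

Lemma lim_zero_aux (c : R) (v : nat -> R) (g : nat -> R) l q :
  0 <= q < 1 -> 0 < l ->
  Un_cv v c -> (forall M, Rabs (g M) <= q ^ S (S M) / l) ->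
  (forall M, g M = v M) -> c = 0.
Proof. intros Hq Hl Hv Hg Heq. apply small_zero. intros eps Heps.
  destruct (Hv (eps / 2) ltac:(lra)) as [N1 HN1].
  assert (Hq' : Rabs q < 1) by (rewrite Rabs_pos_eq; lra).
  destruct (pow_lt_1_zero q Hq' (eps / 2 * l) ltac:(nra)) as [N2 HN2].
  set (M := max N1 N2). specialize (HN1 M (Nat.le_max_l _ _)). specialize (HN2 (S (S M)) ltac:(unfold M; lia)).
  rewrite Rabs_pos_eq in HN2 by (apply pow_le; lra). specialize (Hg M). rewrite Heq in Hg.
  unfold R_dist in HN1. assert (q ^ S (S M) / l <= eps / 2).
  { apply Rmult_le_reg_r with l; auto. unfold Rdiv. rewrite Rmult_assoc, Rinv_l by lra. lra. }
  pose proof (Rabs_triang_inv c (v M)). rewrite Rabs_minus_sym in HN1. lra. Qed.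

Lemma log_series u phi : Cmod u < 1 -> is_series (lf u) phi ->
  Defs.Clog (Defs.Csub (Defs.RtoC 1) u) = (- phi)%C.
Proof. intros Hu Hs. apply is_series_cv in Hs. destruct Hs as [H1 H2].
  set (a := fst u) in *. set (b := snd u) in *.
  assert (Hc : forall m, Cpartial (lf u) m = csum (lf u) (S m)) by (intros; rewrite <- sum_n_Cpartial; apply sum_n_csum).
  pose proof (Cmod_ge_0 u).
  assert (E1 : ln (sqrt ((1 - 1 * a) ^ 2 + (1 * b) ^ 2)) + fst phi = 0).
  { apply (lim_zero_aux _ (fun m => ln (sqrt ((1 - 1 * a) ^ 2 + (1 * b) ^ 2)) + Defs.Re (Cpartial (lf u) m))
      (fun m => ln (sqrt ((1 - 1 * a) ^ 2 + (1 * b) ^ 2)) + fst (csum (lf u) (S m))) (1 - Cmod u) (Cmod u)).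
    lra. lra.
    intros eps Heps. destruct (H1 eps Heps) as [N HN]. exists N. intros n Hn. specialize (HN n Hn).
    unfold R_dist in *. replace (ln (sqrt ((1 - 1 * a) ^ 2 + (1 * b) ^ 2)) + Defs.Re (Cpartial (lf u) n) -
       (ln (sqrt ((1 - 1 * a) ^ 2 + (1 * b) ^ 2)) + fst phi)) with (Defs.Re (Cpartial (lf u) n) - Defs.Re phi)
       by (unfold Defs.Re; ring). auto.
    intros M. apply (proj1 (log_bounds u (S M) Hu)).
    intros M. rewrite Hc. reflexivity. }
  assert (E2 : atan (- (1 * b) / (1 - 1 * a)) + snd phi = 0).
  { apply (lim_zero_aux _ (fun m => atan (- (1 * b) / (1 - 1 * a)) + Defs.Im (Cpartial (lf u) m))
      (fun m => atan (- (1 * b) / (1 - 1 * a)) + snd (csum (lf u) (S m))) (1 - Cmod u) (Cmod u)).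
    lra. lra.
    intros eps Heps. destruct (H2 eps Heps) as [N HN]. exists N. intros n Hn. specialize (HN n Hn).
    unfold R_dist in *. replace (atan (- (1 * b) / (1 - 1 * a)) + Defs.Im (Cpartial (lf u) n) -
       (atan (- (1 * b) / (1 - 1 * a)) + snd phi)) with (Defs.Im (Cpartial (lf u) n) - Defs.Im phi)
       by (unfold Defs.Im; ring). auto.
    intros M. apply (proj2 (log_bounds u (S M) Hu)).
    intros M. rewrite Hc. reflexivity. }
  assert (Ha : 0 < 1 - a).
  { pose proof (re_le_Cmod u). pose proof (Rle_abs a). unfold a in *. change (Re u) with (fst u) in *. lra. }
  unfold Defs.Clog. apply injective_projections; simpl fst; simpl snd.
  - unfold Defs.Cnorm. 
    match goal with |- ln (sqrt ?X) = _ => replace X with ((1 - 1 * a) ^ 2 + (1 * b) ^ 2) by (unfold a, b, Defs.Csub, Defs.Cadd, Defs.Copp, Defs.RtoC, Defs.Re, Defs.Im; cbn [fst snd]; ring) end.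
    lra.
  - unfold Defs.Carg. unfold Defs.Csub, Defs.Cadd, Defs.Copp, Defs.RtoC, Defs.Re, Defs.Im. cbn [fst snd].
    destruct (Rlt_dec 0 (1 + - fst u)) as [_|Hn]. 2: { exfalso. apply Hn. unfold a in Ha. lra. }
    replace ((0 + - snd u) / (1 + - fst u)) with (- (1 * b) / (1 - 1 * a)) by (unfold a, b; field; unfold a in Ha; lra).
    lra.
Qed.

Lemma ex_series_C (a : nat -> C) (b : nat -> R) :
  (forall n, Cmod (a n) <= b n) -> ex_series b -> ex_series a.
Proof. intros H Hb. apply (ex_series_le a b); auto. Qed.

Lemma is_series_zeroC : is_series (fun _ : nat => RtoC 0) (RtoC 0).
Proof. unfold is_series. apply filterlim_ext with (fun _ => RtoC 0).
  intros n. rewrite sum_n_csum. symmetry. apply csum_zero. auto.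
  apply filterlim_const. Qed.

Lemma is_series_csum (f : nat -> nat -> C) (F : nat -> C) n :
  (forall i, (i < n)%nat -> is_series (f i) (F i)) ->
  is_series (fun k => csum (fun i => f i k) n) (csum F n).
Proof. induction n; intros H; simpl. apply is_series_zeroC.
  apply (is_series_plus (fun k => csum (fun i => f i k) n) (f n)). apply IHn; auto. apply H; auto. Qed.

Lemma is_series_scalC (c : C) (a : nat -> C) l : is_series a l -> is_series (fun n => c * a n)%C (c * l)%C.
Proof. intros H. apply (is_series_scal c a l H). Qed.

Lemma is_series_plusC (a b : nat -> C) la lb : is_series a la -> is_series b lb ->
  is_series (fun n => a n + b n)%C (la + lb)%C.
Proof. intros; apply (is_series_plus a b); auto. Qed.

Lemma is_series_oppC (a : nat -> C) la : is_series a la -> is_series (fun n => - a n)%C (- la)%C.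
Proof. intros; apply (is_series_opp a); auto. Qed.

Lemma ex_is_Cseries (a : nat -> C) : ex_series a -> is_series a (Cseries a).
Proof. intros [l H]. rewrite (is_series_Cseries a l H). auto. Qed.

Lemma term_identity (w z ey rC nC S' : C) : rC <> RtoC 0 -> nC <> RtoC 0 -> z <> RtoC 0 ->
  ey <> RtoC 0 -> (ey - 1)%C <> RtoC 0 ->
  (w / (rC * (/ ey - 1)))%C =
  (- ((nC / z) * (w * / (rC * rC)) + RtoC (- / 2) * (- (w * / rC)) + (w * / rC) * S' +
      (w * / rC) * (/ (ey - 1) - (1 + RtoC (- / 2) * (rC / nC * z) + (rC / nC * z) * S') / (rC / nC * z))))%C.
Proof. intros Hr Hn Hz He He1.
  assert (He2 : (/ ey - 1)%C <> RtoC 0).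
  { intros E. apply He1. replace (ey - 1)%C with (- ey * (/ ey - 1))%C by (field; auto). rewrite E. ring. }
  rewrite RtoC_opp, RtoC_inv by lra. field. repeat split; auto.
  intros E. apply He1. replace (ey - 1)%C with (- (1 - ey))%C by ring. rewrite E. ring. Qed.

Lemma bb_1 : bb 1 = - / 2.
Proof. unfold bb, bernoulli. simpl. unfold Binomial.C. simpl. field. Qed.

Definition Sp (L : nat) (y : C) : C := csum (fun i => RtoC (bb (2 + i)) * Cpow y (S i))%C (L - 1).

Lemma Qx_split L y : (1 <= L)%nat -> Qx L y = (1 + RtoC (- / 2) * y + y * Sp L y)%C.
Proof. intros HL. unfold Qx, Sp. replace (S L) with (S (S (L - 1))) by lia.
  rewrite !csum_shift. rewrite <- csum_scal. rewrite bb_0, bb_1. simpl Cpow.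
  replace (csum (fun k : nat => RtoC (bb (S (S k))) * (y * (y * Cpow y k)))%C (L - 1))
    with (csum (fun i : nat => y * (RtoC (bb (2 + i)) * (y * Cpow y i)))%C (L - 1)).
  ring. apply csum_ext_lt. intros; simpl. ring. Qed.

Lemma powZ r i : powerRZ r (- (2 - Z.of_nat (2 + i))) = r ^ i.
Proof. replace (- (2 - Z.of_nat (2 + i)))%Z with (Z.of_nat i) by lia. rewrite <- pow_powerRZ. auto. Qed.

Lemma powZ2 r : powerRZ r (-2) = / (r * r).
Proof. simpl. f_equal. ring. Qed.

Lemma RtoC_neq r : r <> 0 -> RtoC r <> RtoC 0.
Proof. intros H E. apply H. apply (RtoC_inj r 0 E). Qed.

Lemma alg1 qq r Nr K A L : (1 <= L)%nat -> r <> 0 -> Nr <> 0 ->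
  qq * / r * (A * (r / Nr * K) ^ L) = A * (K / Nr) ^ L * (r ^ (L - 1) * qq).
Proof. intros HL Hr HN. destruct L as [|L']. lia. replace (S L' - 1)%nat with L' by lia.
  replace (r / Nr * K) with (r * (K / Nr)) by (field; auto). rewrite Rpow_mult_distr.
  rewrite <- (tech_pow_Rmult r L'). field. auto. Qed.

Lemma CE_opp_inv a : CE (- a)%C = (/ CE a)%C.
Proof. pose proof (CE_opp a). pose proof (CE_nz a). 
  replace (CE (- a)%C) with (CE (- a) * CE a * / CE a)%C by (field; auto). rewrite H. ring. Qed.

Lemma csum_part L (w z : C) r Nr : r <> 0 -> Nr <> 0 ->
  csum (fun i => RtoC (bb (2 + i)) * (Cpow (z / RtoC Nr) (2 + i - 1) *
         (w * RtoC (powerRZ r (- (2 - Z.of_nat (2 + i)))))))%C (L - 1) =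
  (w * / RtoC r * Sp L (RtoC (r / Nr) * z))%C.
Proof. intros Hr HN. unfold Sp. rewrite <- csum_scal. apply csum_ext_lt. intros i _.
  rewrite powZ. replace (2 + i - 1)%nat with (S i) by lia. rewrite RtoC_div, RtoC_pow by auto.
  unfold Cdiv. rewrite !Cpow_mult_l. rewrite !Cpow_S.
  assert (RtoC r <> RtoC 0) by (apply RtoC_neq; auto).
  assert (RtoC Nr <> RtoC 0) by (apply RtoC_neq; auto).
  field. split; auto. Qed.

Lemma Ey_nz y : Re y < 0 -> (CE y - 1)%C <> RtoC 0.
Proof. intros H E. pose proof (Cmod_E_lb y ltac:(lra)). rewrite E, Cmod_0 in H0.
  assert (0 < - Re y / (1 + - Re y)) by (apply Rdiv_lt_0_compat; lra). lra. Qed.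

Theorem proposition2p4 (L : nat) (delta K : R) :
  (1 <= L)%nat -> 0 < delta -> 0 < K ->
  exists M : R, forall (N : nat) (z : Cx),
    (1 <= N)%nat -> Defs.Re z <= - delta -> Cnorm z <= K ->
    Cnorm (Csub (Defs.Copp (chi (Defs.Copp z) (INR N))) (prop24_rhs L N z)) <= M / INR N ^ L.
Proof.
  intros HL Hd HK.
  set (q := exp (- delta)).
  assert (Hq : 0 < q < 1).
  { split. apply exp_pos. unfold q. rewrite <- exp_0. apply exp_increasing. lra. }
  destruct (ex_series_poly_geom (L - 1) q Hq) as [S0 HS0].
  set (m := K / delta).
  destruct (RL_bound L m) as [A [HA HRL]]. unfold m; apply Rdiv_lt_0_compat; lra.
  exists (A * K ^ L * S0).
  intros N z HN Hre Hz.
  change (Cnorm z) with (Cmod z) in Hz. change (Defs.Re z) with (Re z) in Hre.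
  set (Nr := INR N).
  assert (HNr : 0 < Nr) by (apply lt_0_INR; lia).
  assert (Hz0 : (z : C) <> RtoC 0).
  { intros E. rewrite E in Hre. simpl in Hre. lra. }
  set (u := CE z).
  assert (Hu : Cmod u <= q). { unfold u. rewrite Cmod_CE. apply exp_le_mono. auto. }
  assert (Hu1 : Cmod u < 1) by lra.
  assert (Hw : forall n, Cmod (Cpow u (S n)) <= q ^ S n).
  { intros n. rewrite Cmod_pow. apply pow_incr. split. apply Cmod_ge_0. auto. }
  assert (HLi2 : is_series (fun n => (Cpow u (S n) * RtoC (powerRZ (INR (S n)) (-2)))%C) (Li 2 (Defs.Cexp z))).
  { unfold Li. apply ex_is_Cseries. apply ex_series_C with (fun n => INR (S n) ^ 0 * q ^ S n).
    intros n. try change (Defs.Cpow (Defs.Cexp z) (S n)) with (Cpow u (S n)). rewrite Cmod_mult, Cmod_R, powZ2. 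
    assert (1 <= INR (S n)) by (apply (le_INR 1); lia).
    rewrite Rabs_pos_eq by (left; apply Rinv_0_lt_compat; nra). simpl pow. rewrite Rmult_1_l.
    assert (/ (INR (S n) * INR (S n)) <= 1) by (rewrite <- Rinv_1; apply Rinv_le_contravar; nra).
    pose proof (Hw n). pose proof (Cmod_ge_0 (Cpow u (S n))). simpl pow in *. nra.
    apply ex_series_poly_geom; auto. }
  assert (HLil : forall i, is_series (fun n => (Cpow u (S n) * RtoC (powerRZ (INR (S n)) (- (2 - Z.of_nat (2 + i)))))%C)
                             (Li (2 - Z.of_nat (2 + i)) (Defs.Cexp z))).
  { intros i. unfold Li. apply ex_is_Cseries. apply ex_series_C with (fun n => INR (S n) ^ i * q ^ S n).
    intros n. try change (Defs.Cpow (Defs.Cexp z) (S n)) with (Cpow u (S n)). rewrite Cmod_mult, Cmod_R, powZ.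
    rewrite Rabs_pos_eq by (apply pow_le, pos_INR). rewrite Rmult_comm. apply Rmult_le_compat_l.
    apply pow_le, pos_INR. auto.
    apply ex_series_poly_geom; auto. }
  assert (Hlf : ex_series (lf u)).
  { apply ex_series_C with (fun n => INR (S n) ^ 0 * q ^ S n).
    intros n. unfold lf. rewrite Cmod_mult, Cmod_R.
    assert (1 <= INR (S n)) by (apply (le_INR 1); lia).
    rewrite Rabs_pos_eq by (left; apply Rinv_0_lt_compat; nra). simpl pow. rewrite Rmult_1_l.
    assert (/ INR (S n) <= 1) by (rewrite <- Rinv_1; apply Rinv_le_contravar; nra).
    pose proof (Hw n). pose proof (Cmod_ge_0 (Cpow u (S n))). simpl pow in *. nra.
    apply ex_series_poly_geom; auto. }
  destruct Hlf as [phi Hphi].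
  assert (Hlog : Defs.Clog (Defs.Csub (Defs.RtoC 1) (Defs.Cexp z)) = (- phi)%C) by (apply log_series; auto).
  set (yv := fun n => (RtoC (INR (S n) / Nr) * z)%C).
  assert (Hyre : forall n, Re (yv n) = INR (S n) / Nr * Re z).
  { intros n. unfold yv. apply re_scal_l. }
  assert (Hymod : forall n, Cmod (yv n) = INR (S n) / Nr * Cmod z).
  { intros n. unfold yv. rewrite Cmod_mult, Cmod_R, Rabs_pos_eq. auto.
    apply Rdiv_le_0_compat. apply pos_INR. lra. }
  assert (Hrp : forall n, 0 < INR (S n) / Nr) by (intros; apply Rdiv_lt_0_compat; auto; apply lt_0_INR; lia).
  assert (Hyneg : forall n, Re (yv n) < 0).
  { intros n. rewrite Hyre. specialize (Hrp n). nra. }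
  assert (Hysec : forall n, Cmod (yv n) <= m * - Re (yv n)).
  { intros n. rewrite Hyre, Hymod. specialize (Hrp n).
    assert (Cmod z <= m * - Re z).
    { unfold m. apply Rle_trans with K; auto. apply Rmult_le_reg_r with delta; auto.
      unfold Rdiv. replace (K * / delta * - Re z * delta) with (K * - Re z) by (field; lra). nra. }
    nra. }
  set (err := fun n => (Cpow u (S n) * / RtoC (INR (S n)) * RLx L (yv n))%C).
  assert (Herrb : forall n, Cmod (err n) <= A * (K / Nr) ^ L * (INR (S n) ^ (L - 1) * q ^ S n)).
  { intros n. unfold err. assert (Hr : 0 < INR (S n)) by (apply lt_0_INR; lia).
    rewrite !Cmod_mult, Cmod_inv, Cmod_R, Rabs_pos_eq by (try lra; apply RtoC_neq; lra).
    pose proof (HRL (yv n) (Hyneg n) (Hysec n)) as H1. rewrite Hymod in H1.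
    assert (H2 : (INR (S n) / Nr * Cmod z) ^ L <= (INR (S n) / Nr * K) ^ L).
    { apply pow_incr. split. apply Rmult_le_pos. left; auto. apply Cmod_ge_0.
      apply Rmult_le_compat_l. left; auto. auto. }
    pose proof (Hw n). pose proof (Cmod_ge_0 (Cpow u (S n))). pose proof (Cmod_ge_0 (RLx L (yv n))).
    apply Rle_trans with (q ^ S n * / INR (S n) * (A * (INR (S n) / Nr * K) ^ L)).
    apply Rmult_le_compat. apply Rmult_le_pos; auto. left; apply Rinv_0_lt_compat; auto. auto.
    apply Rmult_le_compat_r. left; apply Rinv_0_lt_compat; auto. auto.
    eapply Rle_trans. apply H1. apply Rmult_le_compat_l; auto.
    apply Req_le. apply alg1; auto; lra. }
  assert (Herr : is_series err (Cseries err)).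
  { apply ex_is_Cseries. apply ex_series_C with (fun n => A * (K / Nr) ^ L * (INR (S n) ^ (L - 1) * q ^ S n)); auto.
    exists (A * (K / Nr) ^ L * S0). apply (is_series_scal (A * (K / Nr) ^ L) _ _ HS0). }
  set (E := Cseries err) in *.
  assert (HE : Cmod E <= A * (K / Nr) ^ L * S0).
  { apply (is_series_norm_le err (fun n => A * (K / Nr) ^ L * (INR (S n) ^ (L - 1) * q ^ S n))); auto.
    apply (is_series_scal (A * (K / Nr) ^ L) _ _ HS0). }
  set (rhs_n := fun n => (RtoC Nr / z * (Cpow u (S n) * RtoC (powerRZ (INR (S n)) (-2))) +
      RtoC (- / 2) * (- lf u n) +
      csum (fun i => RtoC (bb (2 + i)) * (Cpow (z / RtoC Nr) (2 + i - 1) *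
         (Cpow u (S n) * RtoC (powerRZ (INR (S n)) (- (2 - Z.of_nat (2 + i)))))))%C (L - 1))%C).
  assert (Hrhs : is_series rhs_n (prop24_rhs L N z)).
  { unfold prop24_rhs. rewrite fold_seq_C. rewrite Hlog. fold Nr. unfold rhs_n.
    apply is_series_plusC. apply is_series_plusC.
    apply is_series_scalC. exact HLi2.
    apply is_series_scalC. apply is_series_oppC. exact Hphi.
    apply (is_series_csum (fun i n => RtoC (bb (2 + i)) * (Cpow (z / RtoC Nr) (2 + i - 1) *
         (Cpow u (S n) * RtoC (powerRZ (INR (S n)) (- (2 - Z.of_nat (2 + i)))))))%C).
    intros i _. apply is_series_scalC. apply is_series_scalC. apply HLil. }
  assert (Hterm : forall n, (- (rhs_n n + err n))%C =
    (let r := INR (S n) in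
     Defs.Cdiv (Defs.Cexp (Defs.Cmul (Defs.RtoC (- r)) (Defs.Copp z)))
         (Defs.Cmul (Defs.RtoC r) (Defs.Csub (Defs.Cexp (Defs.Cmul (Defs.RtoC (r / Nr)) (Defs.Copp z))) (Defs.RtoC 1))))).
  { intros n. cbv zeta. set (r := INR (S n)).
    assert (Hr : 0 < r) by (apply lt_0_INR; lia).
    change (Defs.Cdiv (Defs.Cexp (Defs.Cmul (Defs.RtoC (- r)) (Defs.Copp z)))
         (Defs.Cmul (Defs.RtoC r) (Defs.Csub (Defs.Cexp (Defs.Cmul (Defs.RtoC (r / Nr)) (Defs.Copp z))) (Defs.RtoC 1))))
      with (CE (RtoC (- r) * - z) / (RtoC r * (CE (RtoC (r / Nr) * - z) - 1)))%C.
    replace (RtoC (- r) * - z)%C with (RtoC (INR (S n)) * z)%C by (rewrite RtoC_opp; unfold r; ring).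
    rewrite <- Cpow_CE. fold u.
    replace (RtoC (r / Nr) * - z)%C with (- yv n)%C by (unfold yv, r; ring).
    rewrite CE_opp_inv.
    unfold rhs_n, err. rewrite csum_part by (first [apply not_0_INR; lia | lra]). fold r. fold (yv n).
    unfold RLx. rewrite Qx_split by auto. unfold lf. fold r.
    rewrite powZ2. rewrite RtoC_inv by nra. rewrite RtoC_inv by lra. rewrite RtoC_mult.
    assert (Hy : yv n = (RtoC r / RtoC Nr * z)%C) by (unfold yv; fold r; rewrite RtoC_div; auto; lra).
    rewrite Hy. rewrite (RtoC_div r Nr) by lra.
    rewrite (term_identity (Cpow u (S n)) z (CE (RtoC r / RtoC Nr * z)) (RtoC r) (RtoC Nr) (Sp L (RtoC r / RtoC Nr * z))).
    ring.
    apply RtoC_neq; lra. apply RtoC_neq; lra. auto. apply CE_nz. rewrite <- Hy. apply Ey_nz. auto. }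
  assert (Hchi : chi (Defs.Copp z) Nr = (- (prop24_rhs L N z + E))%C).
  { unfold chi. apply is_series_Cseries. apply (is_series_ext (fun n => - (rhs_n n + err n))%C).
    exact Hterm. apply is_series_oppC. apply is_series_plusC; auto. }
  rewrite Hchi.
  change (Cnorm (Csub (Defs.Copp (- (prop24_rhs L N z + E))%C) (prop24_rhs L N z)))
    with (Cmod ((- (- (prop24_rhs L N z + E)) - prop24_rhs L N z))%C).
  replace ((- (- (prop24_rhs L N z + E)) - prop24_rhs L N z))%C with E
    by (destruct (prop24_rhs L N z), E; apply injective_projections; simpl; ring).
  eapply Rle_trans. apply HE. apply Req_le.
  unfold Rdiv. rewrite Rpow_mult_distr, pow_inv. ring.
Qed.
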